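(* Let $K$ be a finite field, $G$ a finite group and $C$ a two-sided ideal of $KG$ such that the quotient algebra $KG/C$ is a Frobenius algebra. Then $C$ is checkable (as a right ideal). In particular the Jacobson radical $J(KG)$ is checkable.
   Context: A right ideal $I\le KG$ is called checkable if there is $v\in KG$ with $I=\{a\in KG: va=0\}$. A Frobenius algebra is a finite-dimensional $K$-algebra $A$ admitting a $K$-linear map $\lambda:A\to K$ whose kernel contains no nonzero left or right ideal. *)

(* Defs.v *)
From HB Require Import structures.
From mathcomp Require Import all_boot all_order all_algebra all_fingroup all_field.
Set Implicit Arguments. Unset Strict Implicit. Unset Printing Implicit Defensive.
Import GRing.Theory.
Local Open Scope ring_scope.

(* The group algebra KG of the finite group gT (G is the whole group type)
   over the finite field K is represented by the K-vector space
   {ffun gT -> K} (coordinates in the basis G), with convolution product. *)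

Definition ga_one (K : finFieldType) (gT : finGroupType) : {ffun gT -> K} :=
  [ffun g => (g == 1%g)%:R].

Definition ga_mul (K : finFieldType) (gT : finGroupType)
  (a b : {ffun gT -> K}) : {ffun gT -> K} :=
  [ffun g => \sum_(h : gT) a h * b (h^-1 * g)%g].

(* left / right ideals of KG (subsets closed under 0, +, and multiplication
   by KG on the appropriate side; K-scaling follows via scalar elements). *)
Definition is_left_idealb (K : finFieldType) (gT : finGroupType)
  (I : {set {ffun gT -> K}}) : bool :=
  [&& (0 : {ffun gT -> K}) \in I,
      [forall a, forall b, (a \in I) ==> (b \in I) ==> (a + b \in I)]
    & [forall a, forall x, (a \in I) ==> (ga_mul x a \in I)]].

Definition is_right_idealb (K : finFieldType) (gT : finGroupType)
  (I : {set {ffun gT -> K}}) : bool :=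
  [&& (0 : {ffun gT -> K}) \in I,
      [forall a, forall b, (a \in I) ==> (b \in I) ==> (a + b \in I)]
    & [forall a, forall x, (a \in I) ==> (ga_mul a x \in I)]].

Definition is_twosided_ideal (K : finFieldType) (gT : finGroupType)
  (I : {set {ffun gT -> K}}) : Prop :=
  is_left_idealb I /\ is_right_idealb I.

Definition checkable (K : finFieldType) (gT : finGroupType)
  (I : {set {ffun gT -> K}}) : Prop :=
  exists v : {ffun gT -> K}, I = [set a | ga_mul v a == 0].

(* KG/C is a Frobenius algebra: there is a K-linear map
   lambda-bar : KG/C -> K whose kernel contains no nonzero left or right
   ideal of KG/C.  Such maps are exactly the K-linear maps lambda : KG -> K
   vanishing on C; (one-sided) ideals of KG/C are the images of (one-sided)
   ideals L of KG, and such an image is zero iff L is contained in C. *)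
Definition frobenius_quotient (K : finFieldType) (gT : finGroupType)
  (C : {set {ffun gT -> K}}) : Prop :=
  exists lam : {ffun gT -> K} -> K,
    [/\ (forall (k : K) (a b : {ffun gT -> K}), lam ([ffun g => k * a g] + b) = k * lam a + lam b),
        (forall c, c \in C -> lam c = 0),
        (forall L : {set {ffun gT -> K}}, is_left_idealb L ->
            (forall a, a \in L -> lam a = 0) -> L \subset C)
      & (forall L : {set {ffun gT -> K}}, is_right_idealb L ->
            (forall a, a \in L -> lam a = 0) -> L \subset C)].

Definition maximal_left_idealb (K : finFieldType) (gT : finGroupType)
  (M : {set {ffun gT -> K}}) : bool :=
  [&& is_left_idealb M, M != setT &
      [forall N : {set {ffun gT -> K}},
         (is_left_idealb N && (M \subset N)) ==> ((N == M) || (N == setT))]].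

Definition jacobson (K : finFieldType) (gT : finGroupType) : {set {ffun gT -> K}} :=
  [set a | [forall M : {set {ffun gT -> K}}, maximal_left_idealb M ==> (a \in M)]].

(* Main.v *)
Require Import Defs.
From HB Require Import structures.
From mathcomp Require Import all_boot all_order all_algebra all_fingroup all_field.
Set Implicit Arguments. Unset Strict Implicit. Unset Printing Implicit Defensive.
Import GRing.Theory.
Local Open Scope ring_scope.

Section GA.
Variables (K : finFieldType) (gT : finGroupType).

Definition KG := {ffun gT -> K}.
HB.instance Definition _ := GRing.Zmodule.on KG.
HB.instance Definition _ := Finite.on KG.

Lemma ga_mulA : associative (@ga_mul K gT).
Proof.
move=> a b c; apply/ffunP=> g; rewrite /ga_mul !ffunE.
under eq_bigr => h _ do rewrite ffunE big_distrr.
under [RHS]eq_bigr => h _ do rewrite ffunE big_distrl.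
rewrite [RHS]exchange_big /=; apply: eq_bigr => k _.
rewrite [RHS](reindex_inj (mulgI k)) /=; apply: eq_bigr => l _.
by rewrite mulKg mulrA invMg mulgA.
Qed.

Lemma ga_mul1r : left_id (@ga_one K gT) (@ga_mul K gT).
Proof.
move=> a; apply/ffunP=> g; rewrite ffunE (bigD1 1%g) //= big1 ?addr0.
  by rewrite ffunE eqxx mul1r invg1 mul1g.
by move=> h /negbTE nh; rewrite ffunE nh mul0r.
Qed.

Lemma ga_mulr1 : right_id (@ga_one K gT) (@ga_mul K gT).
Proof.
move=> a; apply/ffunP=> g; rewrite ffunE (bigD1 g) //= big1 ?addr0.
  by rewrite ffunE mulVg eqxx mulr1.
move=> h nh; rewrite ffunE.
case: eqP => [/eqP|]; last by rewrite mulr0.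
by rewrite -(inj_eq (mulgI h)) mulKVg mulg1 eq_sym (negbTE nh).
Qed.

Lemma ga_mulDl : left_distributive (@ga_mul K gT) +%R.
Proof.
move=> a b c; apply/ffunP=> g; rewrite !ffunE -big_split /=.
by apply: eq_bigr => h _; rewrite ffunE mulrDl.
Qed.

Lemma ga_mulDr : right_distributive (@ga_mul K gT) +%R.
Proof.
move=> a b c; apply/ffunP=> g; rewrite !ffunE -big_split /=.
by apply: eq_bigr => h _; rewrite ffunE mulrDr.
Qed.

Lemma ga_one_neq0 : (@ga_one K gT : KG) != 0.
Proof.
by apply/eqP => /ffunP/(_ 1%g)/eqP; rewrite !ffunE eqxx oner_eq0.
Qed.

HB.instance Definition _ := GRing.Zmodule_isNzRing.Build KG
  ga_mulA ga_mul1r ga_mulr1 ga_mulDl ga_mulDr ga_one_neq0.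

Lemma mulE (a b : KG) : a * b = ga_mul a b. Proof. by []. Qed.
Lemma oneE : (1 : KG) = ga_one K gT. Proof. by []. Qed.
Local Notation R := (KG).

Definition delta (g : gT) : R := [ffun x => (x == g)%:R].
Definition tr (a : R) : K := a 1%g.

Lemma trM (a b : R) : tr (a * b) = \sum_h a h * b h^-1%g.
Proof. by rewrite /tr mulE /ga_mul ffunE; apply: eq_bigr => h _; rewrite mulg1. Qed.

Lemma trC (a b : R) : tr (a * b) = tr (b * a).
Proof.
rewrite !trM (reindex_inj invg_inj) /=; apply: eq_bigr => h _.
by rewrite invgK mulrC.
Qed.

Lemma trD (a b : R) : tr (a + b) = tr a + tr b.
Proof. by rewrite /tr ffunE. Qed.

Lemma tr0 : tr 0 = 0.
Proof. by rewrite /tr ffunE. Qed.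

Lemma coef_tr (y : R) g : y g = tr (y * delta g^-1).
Proof.
rewrite trM (bigD1 g) //= big1 ?addr0; first by rewrite ffunE eqxx mulr1.
move=> h nh; rewrite ffunE (inj_eq invg_inj) (negbTE nh) mulr0 //.
Qed.

Lemma nondeg (y : R) : (forall z, tr (y * z) = 0) -> y = 0.
Proof. by move=> H; apply/ffunP=> g; rewrite coef_tr H ffunE. Qed.

Definition rep (c : gT -> K) : R := [ffun h => c h^-1%g].

Lemma tr_rep c (a : R) : tr (rep c * a) = \sum_g a g * c g.
Proof.
rewrite trM (reindex_inj invg_inj) /=; apply: eq_bigr => h _.
by rewrite ffunE invgK mulrC.
Qed.

Lemma leftP (L : {set R}) : is_left_idealb L ->
  [/\ 0 \in L, forall a b, a \in L -> b \in L -> a + b \in L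
    & forall x a, a \in L -> x * a \in L].
Proof.
case/and3P=> L0 /forallP LD /forallP LM; split=> //.
  by move=> a b aL bL; move/forallP: (LD a) => /(_ b); rewrite aL bL.
by move=> x a aL; move/forallP: (LM a) => /(_ x); rewrite aL.
Qed.

Lemma rightP (L : {set R}) : is_right_idealb L ->
  [/\ 0 \in L, forall a b, a \in L -> b \in L -> a + b \in L
    & forall x a, a \in L -> a * x \in L].
Proof.
case/and3P=> L0 /forallP LD /forallP LM; split=> //.
  by move=> a b aL bL; move/forallP: (LD a) => /(_ b); rewrite aL bL.
by move=> x a aL; move/forallP: (LM a) => /(_ x); rewrite aL.
Qed.

Lemma mk_left (L : {set R}) : 0 \in L -> (forall a b, a \in L -> b \in L -> a + b \in L) ->
  (forall x a, a \in L -> x * a \in L) -> is_left_idealb L.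
Proof.
move=> L0 LD LM; apply/and3P; split=> //; apply/forallP=> a; apply/forallP=> b;
  apply/implyP=> aL; first (apply/implyP=> bL; exact: LD).
exact: LM.
Qed.

Lemma mk_right (L : {set R}) : 0 \in L -> (forall a b, a \in L -> b \in L -> a + b \in L) ->
  (forall x a, a \in L -> a * x \in L) -> is_right_idealb L.
Proof.
move=> L0 LD LM; apply/and3P; split=> //; apply/forallP=> a; apply/forallP=> b;
  apply/implyP=> aL; first (apply/implyP=> bL; exact: LD).
exact: LM.
Qed.

Lemma part1 (C : {set R}) : is_twosided_ideal C -> frobenius_quotient C -> checkable C.
Proof.
case=> _ /rightP [C0 CD CM] [lam [lin lamC _ Lr]].
have lamD a b : lam (a + b) = lam a + lam b.
  by rewrite -[lam a]mul1r -lin; congr (lam (_ + _)); apply/ffunP=> g; rewrite ffunE mul1r.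
have lam0 : lam 0 = 0.
  by have := lamD 0 0; rewrite addr0 -[X in X = _]addr0 => /addrI <-.
have lamZ k (a : R) : lam [ffun g => k * a g] = k * lam a.
  by have := lin k a 0; rewrite addr0 lam0 addr0.
set w : R := rep (fun g => lam (delta g)).
have rep_lam x : lam x = tr (w * x).
  rewrite tr_rep.
  have -> : x = \sum_g [ffun y => x g * delta g y].
    apply/ffunP=> y; rewrite sum_ffunE (bigD1 y) //= big1 ?addr0.
      by rewrite !ffunE eqxx mulr1.
    by move=> h nh; rewrite !ffunE eq_sym (negbTE nh) mulr0.
  rewrite (big_morph lam lamD lam0); apply: eq_bigr => g _.
  rewrite lamZ sum_ffunE; congr (_ * _).
  rewrite (bigD1 g) //= big1 ?addr0; first by rewrite !ffunE eqxx mulr1.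
  by move=> h nh; rewrite !ffunE eq_sym (negbTE nh) mulr0.
exists w; apply/setP=> a; rewrite inE; apply/idP/idP.
  move=> aC; apply/eqP/ffunP=> g; rewrite coef_tr ffunE -mulrA -rep_lam.
  exact/lamC/CM.
move/eqP; rewrite -mulE => wa0.
pose L := [set (a : R) * x | x : R].
have : L \subset C.
  apply: Lr.
    apply: mk_right.
    - by apply/imsetP; exists 0 => //; rewrite mulr0.
    - move=> _ _ /imsetP [x _ ->] /imsetP [y _ ->].
      by apply/imsetP; exists (x + y) => //; rewrite mulrDr.
    - by move=> z _ /imsetP [x _ ->]; apply/imsetP; exists (x * z) => //; rewrite mulrA.
  by move=> _ /imsetP [x _ ->]; rewrite rep_lam mulrA wa0 mul0r tr0.
by move/subsetP; apply; apply/imsetP; exists 1 => //; rewrite mulr1.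
Qed.


Lemma lidealN (L : {set R}) a : is_left_idealb L -> a \in L -> - a \in L.
Proof. by case/leftP=> _ _ LM aL; rewrite -mulN1r; apply: LM. Qed.

Lemma lideal1 (L : {set R}) : is_left_idealb L -> 1 \in L -> L = setT.
Proof.
case/leftP=> _ _ LM L1; apply/setP=> x; rewrite inE.
by rewrite -[x]mulr1; apply: LM.
Qed.

Lemma exists_max (L : {set R}) : is_left_idealb L -> 1 \notin L ->
  exists M : {set R}, maximal_left_idealb M /\ L \subset M.
Proof.
move=> LL L1.
pose P (N : {set R}) := [&& is_left_idealb N, L \subset N & 1 \notin N].
have PL : P L by rewrite /P LL subxx.
case: (@arg_maxnP _ L P (fun N => #|N|) PL) => M /and3P [ML LM M1] Mmax.
exists M; split=> //; apply/and3P; split=> //.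
  by apply: contraNneq M1 => ->; rewrite inE.
apply/forallP=> N; apply/implyP=> /andP [NL MN].
case: (boolP ((1 : R) \in N)) => N1; first by rewrite (lideal1 NL N1) eqxx orbT.
have PN : P N by rewrite /P NL N1 (subset_trans LM MN).
have := Mmax N PN => le.
suff /eqP-> : M == N by rewrite eqxx.
by rewrite eqEcard MN; exact: le.
Qed.

Local Notation J := (jacobson K gT).

Lemma inJ (a : R) : (a \in J) = [forall M, maximal_left_idealb M ==> (a \in M)].
Proof. by rewrite inE. Qed.

Lemma J_char (a : R) : (a \in J) <-> (forall y : R, exists u : R, u * (1 - y * a) = 1).
Proof.
split.
  move=> aJ y.
  pose L := [set b * (1 - y * a) | b : R].
  have LL : is_left_idealb L.
    apply: mk_left.
    - by apply/imsetP; exists 0 => //; rewrite mul0r.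
    - move=> _ _ /imsetP [x _ ->] /imsetP [z _ ->].
      by apply/imsetP; exists (x + z) => //; rewrite mulrDl.
    - by move=> z _ /imsetP [x _ ->]; apply/imsetP; exists (z * x) => //; rewrite mulrA.
  case: (boolP (1 \in L)) => L1.
    by case/imsetP: L1 => u _ u1; exists u.
  case: (exists_max LL L1) => M [Mm LM].
  move: aJ; rewrite inJ => /forallP /(_ M); rewrite Mm /= => aM.
  case/and3P: Mm => ML MT _.
  case/leftP: (ML) => _ MD MM.
  have yaM : y * a \in M by apply: MM.
  have : 1 - y * a \in M.
    by apply: (subsetP LM); apply/imsetP; exists 1 => //; rewrite mul1r.
  move=> /MD /(_ yaM); rewrite subrK => M1.
  by move: MT; rewrite (lideal1 ML M1) eqxx.
move=> H; rewrite inJ; apply/forallP=> M; apply/implyP=> Mm.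
case/and3P: (Mm) => ML MT /forallP Mmax.
case/leftP: (ML) => M0 MD MM.
apply/negPn/negP=> aM.
pose N := [set m + b * (a : R) | m in M, b in [set: R]].
have NL : is_left_idealb N.
  apply: mk_left.
  - by apply/imset2P; exists 0 0 => //; rewrite mul0r addr0.
  - move=> _ _ /imset2P [m1 b1 m1M _ ->] /imset2P [m2 b2 m2M _ ->].
    apply/imset2P; exists (m1 + m2) (b1 + b2) => //; first exact: MD.
    by rewrite mulrDl addrACA.
  - move=> z _ /imset2P [m b mM _ ->].
    apply/imset2P; exists (z * m) (z * b) => //; first exact: MM.
    by rewrite mulrDr mulrA.
have MN : M \subset N.
  by apply/subsetP=> m mM; apply/imset2P; exists m 0 => //; rewrite mul0r addr0.
have := Mmax N; rewrite NL MN /= => /orP [/eqP NM|/eqP NT].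
  have : a \in N by apply/imset2P; exists 0 1 => //; rewrite mul1r add0r.
  by rewrite NM (negbTE aM).
have : 1 \in N by rewrite NT inE.
case/imset2P=> m b mM _ e1.
case: (H b) => u.
have -> : 1 - b * a = m by rewrite e1 addrK.
move=> um.
have : (1 : R) \in M by rewrite -um; apply: MM.
by move/(lideal1 ML) => MT'; move: MT; rewrite MT' eqxx.
Qed.


Lemma swap_inv (a b u : R) : u * (1 - a * b) = 1 -> (1 + b * u * a) * (1 - b * a) = 1.
Proof.
move=> H.
have E : b * u * a - b * u * a * (b * a) = b * a.
  have -> : b * u * a * (b * a) = b * (u * (a * b)) * a by rewrite !mulrA.
  rewrite -mulrBl -mulrBr -[u in b * (u - _)]mulr1 -mulrBr H mulr1 //.
by rewrite mulrDl mul1r mulrBr mulr1 E subrK.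
Qed.

Lemma J_lideal : is_left_idealb J.
Proof.
apply: mk_left.
- by rewrite inJ; apply/forallP=> M; apply/implyP=> /and3P [/leftP [] ].
- move=> a b; rewrite !inJ => /forallP Ha /forallP Hb; apply/forallP=> M.
  apply/implyP=> Mm; have := Ha M; have := Hb M; rewrite Mm /=.
  by case/and3P: Mm => /leftP [_ MD _] _ _ bM aM; apply: MD.
- move=> x a; rewrite !inJ => /forallP Ha; apply/forallP=> M.
  apply/implyP=> Mm; have := Ha M; rewrite Mm /=.
  by case/and3P: Mm => /leftP [_ _ MM] _ _; apply: MM.
Qed.

Lemma J_rmul (a x : R) : a \in J -> a * x \in J.
Proof.
move/J_char=> H; apply/J_char=> y.
case: (H (x * y)) => u0 /(@swap_inv (x * y) a) Hu.
have Hu' : (1 + a * u0 * (x * y)) * (1 - (a * x) * y) = 1 by rewrite -(mulrA a x y).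
by have := swap_inv Hu'; eexists; eassumption.
Qed.

Lemma J_rideal : is_right_idealb J.
Proof.
by case/leftP: J_lideal => J0 JD _; apply: mk_right => // x a /J_rmul.
Qed.

Lemma nil_inv (u : R) m : u ^+ m = 0 -> exists v, v * (1 - u) = 1.
Proof.
move=> um; exists (\sum_(i < m) u ^+ i).
suff -> : (\sum_(i < m) u ^+ i) * (1 - u) = 1 - u ^+ m by rewrite um subr0.
elim: m {um} => [|m IH]; first by rewrite big_ord0 mul0r expr0 subrr.
rewrite big_ord_recl expr0 mulrDl mul1r.
under eq_bigr => i _ do rewrite exprS.
by rewrite -mulr_sumr -mulrA IH mulrBr mulr1 exprS addrA subrK.
Qed.

Lemma fitting (w : R) : exists m, (0 < m)%N /\ w ^+ m * w ^+ m = w ^+ m.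
Proof.
pose f (i : 'I_#|R|.+1) := w ^+ i.+1.
have : ~~ injectiveb f.
  apply/negP=> /injectiveP inj; have := leq_card f inj.
  by rewrite card_ord ltnn.
case/injectivePn=> i [j ij fij].
wlog lt : i j ij fij / (i < j)%N.
  move=> W; case: (ltngtP i j) => [|lt|eq]; first exact: W.
    by apply: (W j i) => //; rewrite eq_sym.
  by case/negP: ij; apply/eqP; apply: val_inj.
set a := i.+1; set p := (j - i)%N.
have pp : (0 < p)%N by rewrite subn_gt0.
have e1 : w ^+ (a + p) = w ^+ a.
  by rewrite /f in fij; rewrite /a /p addSn subnKC ?(ltnW lt) // fij.
have ek k : w ^+ (a + k * p) = w ^+ a.
  elim: k => [|k IH]; first by rewrite mul0n addn0.
  by rewrite mulSn addnCA exprD IH -exprD addnC e1.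
exists (a * p)%N; split; first by rewrite muln_gt0.
have em : w ^+ (a * p + a * p) = w ^+ (a * p).
  have ap : (a <= a * p)%N by rewrite leq_pmulr.
  rewrite {1}(_ : (a * p = (a * p - a) + a)%N); last by rewrite subnK.
  by rewrite -addnA exprD ek -exprD subnK.
by rewrite -exprD em.
Qed.


Definition prim (e : R) : bool :=
  [forall f : R, ((f * f == f) && (e * f == f) && (f * e == f)) ==> ((f == 0) || (f == e))].

Lemma card_corner (f k : R) : f * f = f -> f * k = k -> k * f = k -> k * k = k -> k != f ->
  (#|[set (k * x * k)%R | x : R]| < #|[set (f * x * f)%R | x : R]|)%N.
Proof.
move=> ff fk kf kk kf'; apply: proper_card; rewrite properE; apply/andP; split.
  apply/subsetP=> _ /imsetP [x _ ->]; apply/imsetP; exists (k * x * k) => //.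
  by rewrite !mulrA fk -!mulrA kf.
apply/subsetPn; exists f.
  by apply/imsetP; exists 1 => //; rewrite mulr1 ff.
apply/negP=> /imsetP [y _ fy]; case/negP: kf'; apply/eqP.
by rewrite -{1}kf fy !mulrA kk.
Qed.

Lemma decomp (f : R) : f * f = f -> exists E : {set R},
  [/\ (forall e, e \in E -> [/\ e * e = e, e != 0, prim e, f * e = e & e * f = e]),
      (forall e e', e \in E -> e' \in E -> e != e' -> e * e' = 0)
    & \sum_(e in E) e = f].
Proof.
suff H : forall n (f : R), (#|[set (f * x * f)%R | x : R]| < n)%N -> f * f = f ->
  exists E : {set R},
  [/\ (forall e, e \in E -> [/\ e * e = e, e != 0, prim e, f * e = e & e * f = e]),
      (forall e e', e \in E -> e' \in E -> e != e' -> e * e' = 0)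
    & \sum_(e in E) e = f].
  by move=> ff; apply: (H _ f (ltnSn _)).
elim=> [|n IH] {}f //; move=> cn ff.
case: (eqVneq f 0) => [->|f0].
  by exists set0; split=> [e|e e'|]; rewrite ?inE ?big_set0.
case: (boolP (prim f)) => pf.
  exists [set f]; split=> [e|e e'|]; rewrite ?inE ?big_set1.
  - by move/eqP=> ->; split.
  - by move=> /eqP-> /eqP->; rewrite eqxx.
  - by [].
case/forallPn: pf => g; rewrite negb_imply negb_or.
case/andP=> /andP [/andP [/eqP gg /eqP fg] /eqP gf] /andP [g0 gf'].
pose h := f - g.
have hh : h * h = h by rewrite /h mulrBl !mulrBr ff fg gf gg subrr subr0.
have fh : f * h = h by rewrite /h mulrBr ff fg.
have hf : h * f = h by rewrite /h mulrBl ff gf.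
have gh : g * h = 0 by rewrite /h mulrBr gf gg subrr.
have hg : h * g = 0 by rewrite /h mulrBl fg gg subrr.
have h0 : h != 0 by rewrite /h subr_eq0 eq_sym.
have hf' : h != f.
  by rewrite /h -subr_eq0 addrAC subrr add0r oppr_eq0.
have cg := card_corner ff fg gf gg gf'.
have ch := card_corner ff fh hf hh hf'.
case: (IH g (leq_trans cg cn) gg) => E1 [E1p E1o E1s].
case: (IH h (leq_trans ch cn) hh) => E2 [E2p E2o E2s].
have o12 e e' : e \in E1 -> e' \in E2 -> e * e' = 0 /\ e' * e = 0.
  move=> /E1p [_ _ _ ge eg] /E2p [_ _ _ he' e'h].
  split; first by rewrite -eg -he' -mulrA (mulrA g) gh mul0r mulr0.
  by rewrite -e'h -ge -mulrA (mulrA h) hg mul0r mulr0.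
have dis : [disjoint E1 & E2].
  rewrite disjoints_subset; apply/subsetP=> e e1; rewrite inE; apply/negP=> e2.
  have [o _] := o12 e e e1 e2.
  by case: (E1p e e1) => ee e0 _ _ _; move: e0; rewrite -ee o eqxx.
exists (E1 :|: E2); split.
- move=> e; rewrite inE => /orP [e1|e2].
    case: (E1p e e1) => ee e0 pe ge eg; split=> //.
      by rewrite -ge mulrA fg.
    by rewrite -eg -mulrA gf.
  case: (E2p e e2) => ee e0 pe he eh; split=> //.
    by rewrite -he mulrA fh.
  by rewrite -eh -mulrA hf.
- move=> e e'; rewrite !inE => /orP [e1|e2] /orP [e1'|e2'] ne.
  + exact: E1o.
  + by case: (o12 e e' e1 e2').
  + by case: (o12 e' e e1' e2).
  + exact: E2o.
- rewrite (eq_bigl [predU E1 & E2]); last by move=> e; rewrite !inE.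
  by rewrite bigU //= E1s E2s /h addrC subrK.
Qed.


Definition sc (k : K) : R := [ffun x => k * (x == 1%g)%:R].

Lemma scE k (a : R) : sc k * a = [ffun g => k * a g].
Proof.
apply/ffunP=> g; rewrite mulE /ga_mul !ffunE (bigD1 1%g) //= big1 ?addr0.
  by rewrite ffunE eqxx mulr1 invg1 mul1g.
by move=> h /negbTE nh; rewrite ffunE nh mulr0 mul0r.
Qed.

Lemma sum_ord_g (F : gT -> K) : \sum_(j < #|gT|) F (enum_val j) = \sum_g F g.
Proof.
by rewrite [RHS](reindex (fun j : 'I_#|gT| => enum_val j)) //; apply: onW_bij; apply: enum_val_bij.
Qed.

Lemma sep (S : {set R}) (e : R) : is_left_idealb S -> e \notin S ->
  exists c : gT -> K, (forall j : R, j \in S -> \sum_g j g * c g = 0) /\ \sum_g e g * c g != 0.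
Proof.
move=> SL eS; case/leftP: (SL) => S0 SD SM.
pose vec (a : R) : 'rV[K]_#|gT| := \row_j a (enum_val j).
pose V : 'M[K]_(#|R|, #|gT|) :=
  \matrix_(i, j) (if enum_val i \in S then (enum_val i : R) (enum_val j) else 0).
have notin : ~~ (vec e <= V)%MS.
  apply/negP=> /submxP [D eD]; case/negP: eS.
  have -> : e = \sum_(i < #|R|)
      [ffun g => D 0 i * (if enum_val i \in S then (enum_val i : R) g else 0)].
    apply/ffunP=> g; have := congr1 (fun M : 'M[K]_(1, #|gT|) => M 0 (enum_rank g)) eD.
    rewrite !mxE enum_rankK => ->; rewrite sum_ffunE; apply: eq_bigr => i _.
    by rewrite !mxE ffunE enum_rankK.
  apply: (big_ind (fun x : R => x \in S)); [exact: S0 | exact: SD | move=> i _].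
  case: (boolP (enum_val i \in S)) => iS.
    by rewrite -scE; apply: SM.
  try rewrite (negbTE iS).
  by have -> : [ffun g => D 0 i * 0] = 0 :> R by apply/ffunP=> g; rewrite !ffunE mulr0.
set C := cokermx V.
have nz : vec e *m C != 0 by rewrite -submxE.
have [k nzk] : exists k, (vec e *m C) 0 k != 0.
  apply/existsP; apply: contraNT nz => /existsPn H.
  by apply/eqP/matrixP=> i j; rewrite ord1 [RHS]mxE; apply/eqP/negbNE/H.
exists (fun g => C (enum_rank g) k); split.
  move=> j jS; rewrite -sum_ord_g.
  have := congr1 (fun M : 'M[K]_(#|R|, _) => M (enum_rank j) k) (mulmx_coker V).
  rewrite [RHS]mxE mxE => H0; rewrite -[RHS]H0; apply: eq_bigr => l _.
  by rewrite /V !mxE !enum_valK enum_rankK jS.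
rewrite -sum_ord_g; move: nzk; rewrite mxE.
by under eq_bigr => l _ do rewrite /vec mxE; under [X in _ -> X != 0]eq_bigr => l _ do rewrite enum_valK.
Qed.


Lemma soc_elt (e : R) : e * e = e -> e != 0 ->
  exists s : R, [/\ s != 0, e * s = s, s * e = s & forall j, j \in J -> s * j = 0].
Proof.
move=> ee e0.
have eJ : e \notin J.
  apply/negP=> /J_char /(_ 1) [u]; rewrite mul1r => H.
  case/eqP: e0; have := congr1 (fun z => z * e) H.
  by rewrite mul1r -mulrA mulrBl mul1r ee subrr mulr0 => <-.
case: (sep J_lideal eJ) => c [cJ ce].
case/leftP: J_lideal => J0 JD JM.
pose w := rep c; pose x := e * w * e.
have trx j : j \in J -> tr (x * j) = 0.
  move=> jJ; rewrite /x -!mulrA trC -!mulrA (mulrA e j e) tr_rep.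
  by apply: cJ; apply: J_rmul; apply: JM.
exists x; split.
- apply: contra ce => /eqP x0.
  have := congr1 tr x0; rewrite tr0 /x -mulrA trC -mulrA ee tr_rep => ->.
  by [].
- by rewrite /x !mulrA ee.
- by rewrite /x -mulrA ee.
move=> j jJ; apply: nondeg => z; rewrite -mulrA; apply: trx.
exact: J_rmul.
Qed.

Lemma loc (e s x : R) : e * e = e -> prim e -> s != 0 -> s * e = s ->
  e * x = x -> s * x = 0 -> x \in J.
Proof.
move=> ee pe s0 se ex sx; apply/J_char=> y.
pose w := e * x * y * e.
have ew : e * w = w by rewrite /w !mulrA ee.
have we : w * e = w by rewrite /w -mulrA ee.
have sw : s * w = 0 by rewrite /w !mulrA -(mulrA s e x) ex sx !mul0r.
case: (fitting w) => -[|m'] [] // _ idm.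
have ef : e * w ^+ m'.+1 = w ^+ m'.+1 by rewrite exprS mulrA ew.
have fe : w ^+ m'.+1 * e = w ^+ m'.+1 by rewrite exprSr -mulrA we.
move/forallP: pe => /(_ (w ^+ m'.+1)); rewrite idm ef fe !eqxx /=.
case/orP=> /eqP wm; last first.
  case/eqP: s0; by rewrite -se -wm exprS mulrA sw mul0r.
have xyx : w * (x * y) = x * y * (x * y).
  by rewrite /w -(mulrA (e * x * y) e) (mulrA e x y) ex.
have pxy k : (x * y) ^+ k.+1 = w ^+ k * (x * y).
  elim: k => [|k IH]; first by rewrite expr1 expr0 mul1r.
  by rewrite exprSr IH [in RHS]exprSr -[in RHS]mulrA xyx !mulrA.
have pyx k : (y * x) ^+ k.+1 = y * (x * y) ^+ k * x.
  elim: k => [|k IH]; first by rewrite expr1 expr0 mulr1.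
  by rewrite exprSr IH [in RHS]exprSr -!mulrA.
apply: (@nil_inv _ m'.+3).
by rewrite pyx pxy wm mul0r mulr0 mul0r.
Qed.

Lemma part2 : checkable J.
Proof.
case: (decomp (mul1r (1 : R))) => E [Ep Eo Es].
pose P (e s : R) := [&& s != 0, e * s == s, s * e == s & [forall j in J, s * j == 0]].
pose s (e : R) := odflt 0 [pick t | P e t].
have sP e : e \in E -> [/\ s e != 0, e * s e = s e, s e * e = s e
    & forall j, j \in J -> s e * j = 0].
  move=> eE; case: (Ep e eE) => ee e0 _ _ _.
  rewrite /s; case: pickP => [t /and4P [t0 /eqP et /eqP te /forall_inP tj] /=|none].
    by split=> // j /tj /eqP.
  case: (soc_elt ee e0) => t [t0 et te tj].
  have := none t; rewrite /P t0 et te !eqxx /=.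
  by move/negbT/forall_inPn => [j /tj -> ]; rewrite eqxx.
pose v := \sum_(e in E) s e.
exists v; apply/setP=> a; rewrite [X in _ = X]inE -mulE; apply/idP/idP.
  move=> aJ; rewrite /v mulr_suml big1 // => e eE.
  by case: (sP e eE) => _ _ _ ->.
move/eqP=> va.
case/leftP: J_lideal => J0 JD JM.
have eaJ e : e \in E -> e * a \in J.
  move=> eE; case: (Ep e eE) => ee _ pe _ _; case: (sP e eE) => s0 es se _.
  have ev : e * v = s e.
    rewrite /v mulr_sumr (bigD1 e) //= es big1 ?addr0 // => e' /andP [e'E ne].
    case: (sP e' e'E) => _ e's _ _.
    by rewrite -e's mulrA (Eo e e') ?mul0r // eq_sym.
  apply: (loc ee pe s0 se); first by rewrite mulrA ee.
  by rewrite mulrA se -ev -mulrA va mulr0.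
have -> : a = (1 : R) * a by rewrite mul1r.
rewrite -Es mulr_suml.
by apply: (big_ind (fun x : R => x \in J)) => // e eE; apply: eaJ.
Qed.

End GA.

Unset Implicit Arguments.

Theorem mainTheorem8 (K : finFieldType) (gT : finGroupType) :
  (forall C : {set {ffun gT -> K}},
      is_twosided_ideal C -> frobenius_quotient C -> checkable C)
  /\ checkable (jacobson K gT).
Proof.
split; first exact: part1.
exact: part2.
Qed.
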